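(* Let $L$ be a finite lattice which is a subdirect product $L\subseteq\prod_{i=1}^t L_i$ of finite lattices. Then every line top of $L$ is sub-irreducible, and consequently every line top of $L$ belongs to the scaffolding $G(L)$.
   Context: $\pi_i:L\to L_i$ is the surjective restricted projection, $\sigma_i(y):=\bigwedge\{x\in L:\pi_i(x)=y\}$, and $G(L):=\bigcup_{i=1}^t\sigma_i(L_i\setminus\{0\})$. An element $x$ is a line top if the set of its lower covers $x_1,\dots,x_n$ has $n\ge 3$ elements and their meet $\underline{x}=x_1\wedge\dots\wedge x_n$ is covered by each $x_i$. A quotient $a/b$ is prime if $b\prec a$; $a/b$ transposes up to $c/d$ if $a\wedge d=b$, $a\vee d=c$; quotients are projective if connected by a finite chain of up/down transpositions. An element $v\ne0$ is sub-irreducible if all prime quotients $v/w$ ($w\prec v$) are mutually projective. *)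

(* Defs.v *)
From HB Require Import structures.
From mathcomp Require Import all_boot all_order.
Set Implicit Arguments. Unset Strict Implicit. Unset Printing Implicit Defensive.
Import Order.TTheory.
Local Open Scope order_scope.

Section Defs.
Context {d : Order.disp_t} {L : finTBLatticeType d}.

Definition covers (b a : L) : bool :=
  (b < a) && [forall c : L, ~~ ((b < c) && (c < a))].

Definition lower_meet (x : L) : L := \meet_(y : L | covers y x) y.

Definition line_top (x : L) : bool :=
  (3 <= #|[pred y : L | covers y x]|)%N &&
  [forall y : L, covers y x ==> covers (lower_meet x) y].

(* quotients a/b are pairs (a, b); a/b transposes up to c/d *)
Definition transp_up (p q : L * L) : bool :=
  (p.1 `&` q.2 == p.2) && (p.1 `|` q.2 == q.1).

Definition transp_step (p q : L * L) : bool := transp_up p q || transp_up q p.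

Definition projective (p q : L * L) : bool := connect transp_step p q.

Definition sub_irreducible (v : L) : Prop :=
  v != \bot /\
  forall w1 w2 : L, covers w1 v -> covers w2 v -> projective (v, w1) (v, w2).
End Defs.

(* L is a subdirect product of the L_i (i < t): the map x |-> (pi i x)_i is an
   injective lattice homomorphism and every restricted projection is onto. *)
Definition subdirect_product {d : Order.disp_t} {L : finTBLatticeType d}
  (t : nat) (di : 'I_t -> Order.disp_t) (Li : forall i, finTBLatticeType (di i))
  (pi : forall i, L -> Li i) : Prop :=
  [/\ forall i (x y : L), pi i (x `&` y) = pi i x `&` pi i y,
      forall i (x y : L), pi i (x `|` y) = pi i x `|` pi i y,
      forall i (y : Li i), exists x : L, pi i x = y
    & forall x y : L, (forall i, pi i x = pi i y) -> x = y].

Definition sigma {d : Order.disp_t} {L : finTBLatticeType d} {dl : Order.disp_t}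
  {Li : finTBLatticeType dl} (p : L -> Li) (y : Li) : L :=
  \meet_(x : L | p x == y) x.

Definition scaffolding {d : Order.disp_t} {L : finTBLatticeType d}
  (t : nat) (di : 'I_t -> Order.disp_t) (Li : forall i, finTBLatticeType (di i))
  (pi : forall i, L -> Li i) (x : L) : Prop :=
  exists (i : 'I_t) (y : Li i), y != \bot /\ x = sigma (pi i) y.

(* Main.v *)
Require Import Defs.
From HB Require Import structures.
From mathcomp Require Import all_boot all_order.
From Stdlib Require Import Classical.
Set Implicit Arguments. Unset Strict Implicit. Unset Printing Implicit Defensive.
Import Order.TTheory.
Local Open Scope order_scope.

Section Aux.
Context {d : Order.disp_t} {L : finTBLatticeType d}.

Lemma covers_lt (b a : L) : covers b a -> b < a.
Proof. by case/andP. Qed.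

Lemma covers_no (b a c : L) : covers b a -> b < c -> c < a -> False.
Proof.
case/andP=> _ /forallP /(_ c); rewrite negb_and => /orP [] /negP; auto.
Qed.

Definition btw (z x : L) := [pred u : L | (z < u) && (u < x)].

Lemma below_cover (z x : L) : z < x -> exists y, covers y x && (z <= y).
Proof.
move=> zx.
have [n hn] : exists n, (#|btw z x| < n)%N by exists #|btw z x|.+1.
elim: n z zx hn => [|n IH] z zx hn; first by rewrite ltn0 in hn.
case: (boolP (covers z x)) => hc; first by exists z; rewrite hc lexx.
move: hc; rewrite /covers zx /= => /forallPn [c /negbNE /andP [zc cx]].
have hp : btw c x \proper btw z x.
  apply/properP; split.
    by apply/subsetP => u; rewrite !inE => /andP [cu ->]; rewrite (lt_trans zc cu).
  by exists c; rewrite !inE ?zc ?cx // ltxx.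
have := proper_card hp => hlt.
have [y /andP [cy le]] := IH c cx (leq_trans hlt (ltnSE hn)).
by exists y; apply/andP; split; [exact: cy | exact: le_trans (ltW zc) le].
Qed.

Lemma third (A : {pred L}) (a b : L) :
  (2 < #|A|)%N -> exists c, [&& c \in A, c != a & c != b].
Proof.
move=> h.
have : (0 < #|[predD1 [predD1 A & a] & b]|)%N.
  rewrite lt0n; apply/negP => /eqP e; move: h.
  rewrite (cardD1 a) (cardD1 b [predD1 A & a]) e addn0.
  by case: (_ \in _); case: (_ \in _).
case/card_gt0P => c; rewrite !inE => /and3P [cb ca cA].
by exists c; rewrite cA ca cb.
Qed.

Variables (dl : Order.disp_t) (M : finTBLatticeType dl) (p : L -> M).
Hypotheses (hm : forall x y, p (x `&` y) = p x `&` p y)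
  (hj : forall x y, p (x `|` y) = p x `|` p y)
  (hs : forall y, exists x, p x = y).

Lemma p_mono (a b : L) : a <= b -> p a <= p b.
Proof. by move/meet_idPl => e; apply/meet_idPl; rewrite -hm e. Qed.

Lemma p_top : p \top = \top.
Proof.
have [u hu] := hs \top.
by rewrite -(join_l (lex1 u)) hj hu joinx1.
Qed.

Lemma p_bot : p \bot = \bot.
Proof.
have [u hu] := hs \bot.
by rewrite -(meet_l (le0x u)) hm hu meetx0.
Qed.

Lemma p_sigma (x : L) : p (sigma p (p x)) = p x.
Proof.
apply/le_anti/andP; split.
  by apply: p_mono; apply: meets_inf; rewrite /= eqxx.
rewrite /sigma; apply: (big_ind (fun a => p x <= p a)).
- by rewrite p_top lex1.
- by move=> a b ha hb; rewrite hm lexI ha hb.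
- by move=> u /eqP ->.
Qed.
End Aux.

Theorem mainTheorem4 (d : Order.disp_t) (L : finTBLatticeType d)
  (t : nat) (di : 'I_t -> Order.disp_t) (Li : forall i, finTBLatticeType (di i))
  (pi : forall i, L -> Li i) :
  subdirect_product pi ->
  forall x : L, line_top x -> sub_irreducible x /\ scaffolding pi x.
Proof.
case=> hm hj hs hinj x /andP [hcard /forallP hcov].
set m := lower_meet x.
have mle : forall c, covers c x -> m <= c.
  by move=> c hc; apply: meets_inf.
have mcov : forall c, covers c x -> covers m c.
  by move=> c hc; move/implyP: (hcov c); apply.
have hJ : forall a b, covers a x -> covers b x -> a != b -> a `|` b = x.
  move=> a b ha hb ab.
  have : a `|` b <= x by rewrite leUx !ltW ?covers_lt.
  rewrite le_eqVlt => /orP [/eqP //|h].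
  exfalso; have : a <= a `|` b by rewrite leUl.
  rewrite le_eqVlt => /orP [/eqP e|h2]; last exact: covers_no ha h2 h.
  have : b < a.
    by rewrite lt_neqAle eq_sym ab e leUr.
  by move=> h3; apply: covers_no hb h3 (covers_lt ha).
have hM : forall a b, covers a x -> covers b x -> a != b -> a `&` b = m.
  move=> a b ha hb ab.
  have : m <= a `&` b by rewrite lexI !mle.
  rewrite le_eqVlt => /orP [/eqP -> //|h].
  exfalso; have : a `&` b <= a by rewrite leIl.
  rewrite le_eqVlt => /orP [/eqP e|h2]; last exact: covers_no (mcov a ha) h h2.
  have : a < b by rewrite lt_neqAle ab -e leIr.
  by move=> h3; apply: covers_no ha h3 (covers_lt hb).
have [c0 /and3P [hc0 _ _]] := third x x hcard.
rewrite inE /= in hc0.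
have mx : m < x by apply: le_lt_trans (mle _ hc0) (covers_lt hc0).
split.
  split.
    apply/negP => /eqP ex; move: (covers_lt hc0); rewrite ex.
    by rewrite ltx0.
  move=> w1 w2 h1 h2.
  case: (eqVneq w1 w2) => [-> | ne]; first exact: connect0.
  have [c /and3P [hc cw1 cw2]] := third w1 w2 hcard.
  rewrite inE /= in hc.
  rewrite /projective; apply: (connect_trans (y := (c, m))); apply: connect1.
  - by apply/orP; right; rewrite /transp_up /= (hM c w1) // (hJ c w1) // !eqxx.
  - by apply/orP; left; rewrite /transp_up /= (hM c w2) // (hJ c w2) // !eqxx.
apply: NNPP => hno.
have key : forall i, pi i m = pi i x.
  move=> i.
  have hneq : sigma (pi i) (pi i x) != x.
    apply/negP => /eqP e; apply: hno; exists i, (pi i x); split => //.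
    apply/negP => /eqP e0.
    have : sigma (pi i) (pi i x) <= \bot.
      by apply: meets_inf; rewrite /= e0 (p_bot (hm i) (hs i)).
    rewrite e lex0 => /eqP ex.
    by move: mx; rewrite ex ltx0.
  have hle : sigma (pi i) (pi i x) <= x by apply: meets_inf; rewrite /= eqxx.
  have [j /andP [hjc hjle]] : exists y, covers y x && (sigma (pi i) (pi i x) <= y).
    by apply: below_cover; rewrite lt_neqAle hneq hle.
  have pj : pi i j = pi i x.
    apply/le_anti/andP; split; first by apply: p_mono (hm i) _ _ (ltW (covers_lt hjc)).
    by rewrite -{1}(p_sigma (hm i) (hj i) (hs i) x); apply: p_mono (hm i) _ _ hjle.
  have other : forall k, covers k x -> k != j -> pi i k = pi i m.
    move=> k hk kj; rewrite -(hM j k) // 1?eq_sym // hm pj.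
    by apply/esym/meet_idPr; apply: p_mono (hm i) _ _ (ltW (covers_lt hk)).
  have [k /and3P [hk kj _]] := third j j hcard.
  have [l /and3P [hl lj lk]] := third j k hcard.
  rewrite inE /= in hk; rewrite inE /= in hl.
  by rewrite -(hJ k l) // 1?eq_sym // hj (other k) ?(other l) ?joinxx.
by move: mx; rewrite (hinj _ _ key) ltxx.
Qed.
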